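(* Let $\mathcal K\subseteq\mathbb R^d$ be closed and convex, $\alpha,\epsilon,L>0$, and let $\ell_1,\dots,\ell_T:\mathcal K\to\mathbb R$ be $(\alpha,\epsilon)$-nearly strongly convex with subgradients bounded in norm by $L$, revealed online together with scales $g_1,\dots,g_T\in[0,1]$ (each possibly chosen adaptively). Run online gradient descent: pick any $x_1\in\mathcal K$, and set $x_{t+1}=\Pi_{\mathcal K}\big(x_t-\eta_tg_t\nabla\ell_t(x_t)\big)$ with $\eta_t=R'(G_t)$, $G_t=\sum_{s\le t}g_s$, where $R'(z)=\frac2\alpha$ for $z\in[0,1]$, $R'(z)=\frac{2}{\alpha z}$ for $z\in\big[1,(\frac{\sqrt2L}{\alpha\epsilon})^2\big]$, and $R'(z)=\frac{\sqrt2\,\epsilon}{L\sqrt z}$ for $z\ge(\frac{\sqrt2L}{\alpha\epsilon})^2$. Then for every $x^*\in\mathcal K$, $$\sum_{t=1}^Tg_t\big(\ell_t(x_t)-\ell_t(x^* )\big)\le2\sqrt2\,\epsilon L\sqrt{G_T}+\frac{L^2}{\alpha}\big(\log(G_T+1)+1\big).$$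
   Context: A continuous function $h$ on a convex set $\mathcal K$ is $(\alpha,\epsilon)$-nearly strongly convex if for all $x,y\in\mathcal K$ and every subgradient $\nabla h(x)$, $h(y)-h(x)-\nabla h(x)^\top(y-x)\ge\frac\alpha2\big(\|y-x\|-\epsilon\big)_+^2$, where $(z)_+=\max(z,0)$. $\Pi_{\mathcal K}$ is Euclidean projection onto $\mathcal K$; $\nabla\ell_t(x_t)$ is any subgradient. *)

(* Defs.v *)
From HB Require Import structures.
From mathcomp Require Import all_boot all_order all_algebra.
From mathcomp Require Import all_classical all_reals all_analysis.
Set Implicit Arguments. Unset Strict Implicit. Unset Printing Implicit Defensive.
Import Order.TTheory GRing.Theory Num.Theory numFieldNormedType.Exports.
Local Open Scope classical_set_scope.
Local Open Scope ring_scope.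

Section Defs.
Context {R : realType} {d : nat}.

Definition dotv (u v : 'rV[R]_d) : R := \sum_(i < d) u ord0 i * v ord0 i.
Definition enorm (u : 'rV[R]_d) : R := Num.sqrt (dotv u u).

Definition convex_set_rV (K : set 'rV[R]_d) : Prop :=
  forall x y, K x -> K y -> forall l : R, 0 <= l <= 1 ->
    K (l *: x + (1 - l) *: y).

Definition is_subgradient (K : set 'rV[R]_d) (h : 'rV[R]_d -> R)
    (x v : 'rV[R]_d) : Prop :=
  forall y, K y -> h x + dotv v (y - x) <= h y.

Definition nearly_strongly_convex (K : set 'rV[R]_d) (alpha eps : R)
    (h : 'rV[R]_d -> R) : Prop :=
  {within K, continuous h} /\
  forall x y v, K x -> K y -> is_subgradient K h x v ->
    alpha / 2 * (Num.max (enorm (y - x) - eps) 0) ^+ 2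
      <= h y - h x - dotv v (y - x).

Definition is_proj (K : set 'rV[R]_d) (z p : 'rV[R]_d) : Prop :=
  K p /\ forall y, K y -> enorm (p - z) <= enorm (y - z).

End Defs.

Definition Rprime {R : realType} (alpha eps L z : R) : R :=
  if z <= 1 then 2 / alpha
  else if z <= (Num.sqrt 2 * L / (alpha * eps)) ^+ 2 then 2 / (alpha * z)
  else Num.sqrt 2 * eps / (L * Num.sqrt z).

Definition cumG {R : realType} (g : nat -> R) (t : nat) : R :=
  \sum_(1 <= s < t.+1) g s.

(* Main.v *)
Require Import Defs.
From HB Require Import structures.
From mathcomp Require Import all_boot all_order all_algebra.
From mathcomp Require Import all_classical all_reals all_analysis.
From mathcomp Require Import ring lra.
Import Order.TTheory GRing.Theory Num.Theory numFieldNormedType.Exports.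
Local Open Scope classical_set_scope.
Local Open Scope ring_scope.


Section Dot.
Context {R : realType} {d : nat}.
Implicit Types u v w : 'rV[R]_d.

Lemma dotvC u v : dotv u v = dotv v u.
Proof. by rewrite /dotv; apply: eq_bigr => i _; rewrite mulrC. Qed.

Lemma dotvDl u v w : dotv (u + v) w = dotv u w + dotv v w.
Proof. by rewrite /dotv -big_split; apply: eq_bigr => i _; rewrite mxE mulrDl. Qed.

Lemma dotvZl (a : R) u w : dotv (a *: u) w = a * dotv u w.
Proof. by rewrite /dotv mulr_sumr; apply: eq_bigr => i _; rewrite mxE mulrA. Qed.

Lemma dotvDr u v w : dotv w (u + v) = dotv w u + dotv w v.
Proof. by rewrite dotvC dotvDl !(dotvC w). Qed.

Lemma dotvZr (a : R) u w : dotv w (a *: u) = a * dotv w u.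
Proof. by rewrite dotvC dotvZl dotvC. Qed.

Lemma dotv_ge0 u : 0 <= dotv u u.
Proof. by rewrite /dotv; apply: sumr_ge0 => i _; rewrite -expr2 sqr_ge0. Qed.

Lemma dotv_lin2 (s t : R) u v :
  dotv (s *: u + t *: v) (s *: u + t *: v) =
  s ^+ 2 * dotv u u + 2 * s * t * dotv u v + t ^+ 2 * dotv v v.
Proof.
rewrite !dotvDl !dotvDr !dotvZl !dotvZr (dotvC v u); ring.
Qed.

Lemma enorm_sq u : enorm u ^+ 2 = dotv u u.
Proof. by rewrite /enorm sqr_sqrtr // dotv_ge0. Qed.

Lemma enorm_ge0 u : 0 <= enorm u.
Proof. exact: sqrtr_ge0. Qed.

Lemma enorm_le u v : enorm u <= enorm v -> dotv u u <= dotv v v.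
Proof. by rewrite /enorm ler_sqrt // dotv_ge0. Qed.

Lemma CS u v : dotv u v <= enorm u * enorm v.
Proof.
set A := dotv u u; set B := dotv v v; set P := dotv u v.
have hA : 0 <= A by exact: dotv_ge0.
have hB : 0 <= B by exact: dotv_ge0.
have h1 := dotv_ge0 (P *: u + (- A) *: v).
have h2 := dotv_ge0 (B *: u + (- P) *: v).
have h3 := dotv_ge0 (1 *: u + (- 1) *: v).
rewrite dotv_lin2 -/A -/B -/P in h1.
rewrite dotv_lin2 -/A -/B -/P in h2.
rewrite dotv_lin2 -/A -/B -/P in h3.
have hn : 0 <= enorm u * enorm v by rewrite mulr_ge0 // enorm_ge0.
case: (leP P 0) => hP; first by apply: le_trans hn.
have hsq : P ^+ 2 <= A * B.
  have [hA0|hA0] := eqVneq A 0; last first.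
    have hAp : 0 < A by rewrite lt_def hA0 hA.
    have : 0 <= A * (A * B - P ^+ 2) by nra.
    by rewrite pmulr_rge0 // subr_ge0.
  - rewrite hA0 in h2 h3 *.
    have hB0 : B = 0.
      apply/eqP; rewrite eq_le hB andbT; apply/negP => /negP; rewrite -ltNge => hb.
      have := mulr_gt0 hb (mulr_gt0 hP hP); nra.
    rewrite hB0 in h3; nra.
rewrite /enorm -/A -/B -sqrtrM //.
have -> : P = Num.sqrt (P ^+ 2) by rewrite sqrtr_sqr gtr0_norm.
by rewrite ler_sqrt // mulr_ge0.
Qed.

Lemma proj_nonexp (K : set 'rV[R]_d) z p y :
  convex_set_rV K -> is_proj K z p -> K y ->
  dotv (p - y) (p - y) <= dotv (z - y) (z - y).
Proof.
move=> cK [Kp Hp] Ky.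
set A := dotv (p - z) (p - z); set B := dotv (p - z) (y - p);
set N := dotv (y - p) (y - p).
have hN : 0 <= N by exact: dotv_ge0.
have key : forall l : R, 0 < l <= 1 -> 0 <= 2 * B + l * N.
  move=> l /andP[l0 l1].
  have Kq := cK y p Ky Kp l (introT andP (conj (ltW l0) l1)).
  have := enorm_le _ _ (Hp _ Kq).
  have -> : l *: y + (1 - l) *: p - z = 1 *: (p - z) + l *: (y - p).
    by apply/matrixP => i j; rewrite !mxE; ring.
  rewrite dotv_lin2 -/A -/B -/N => h.
  have : 0 <= l * (2 * B + l * N) by nra.
  by rewrite pmulr_rge0.
have hB : 0 <= B.
  rewrite leNgt; apply/negP => hB.
  have hNB : 0 < N - B by lra.
  set l := - B / (N - B).
  have hl : l * (N - B) = - B by rewrite /l mulfVK // gt_eqF.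
  have l0 : 0 < l by rewrite /l divr_gt0 // oppr_gt0.
  have l1 : l <= 1 by rewrite /l ler_pdivrMr // mul1r; lra.
  have := key l (introT andP (conj l0 l1)).
  move=> h.
  have : 0 <= (2 * B + l * N) * (N - B) by rewrite mulr_ge0 // ltW.
  nra.
have -> : z - y = 1 *: (p - y) + (-1) *: (p - z).
  by apply/matrixP => i j; rewrite !mxE; ring.
rewrite dotv_lin2.
have -> : dotv (p - y) (p - z) = - B.
  have -> : p - y = (-1) *: (y - p) by apply/matrixP => i j; rewrite !mxE; ring.
  by rewrite dotvZl dotvC -/B mulN1r.
have hA : 0 <= A by exact: dotv_ge0.
rewrite -/A expr1n mulr1 sqrrN expr1n !mul1r; lra.
Qed.
End Dot.
Section Reals.
Context {R : realType}.

Lemma Fbound (alpha eps g Del b D : R) : 0 < alpha -> 0 < eps -> 0 <= g ->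
  0 <= Del -> Del <= alpha * g / 4 -> 0 <= b -> 0 <= D ->
  Del * D ^+ 2 + b * g * D - g * alpha / 2 * (Num.max (D - eps) 0) ^+ 2
  <= 2 * eps ^+ 2 * Del + 2 * b * g * eps + b ^+ 2 * g / alpha.
Proof.
move=> a0 e0 g0 D0 Da b0 DD.
have X0 : 0 <= b ^+ 2 * g / alpha.
  by apply: divr_ge0; [apply: mulr_ge0 => //; exact: sqr_ge0 | lra].
case: (leP D eps) => hD.
  rewrite max_r; last by lra.
  have h1 : Del * D ^+ 2 <= Del * eps ^+ 2 by rewrite ler_wpM2l // lerXn2r // ?nnegrE //; lra.
  have h2 : b * g * D <= b * g * eps by rewrite ler_wpM2l // mulr_ge0.
  have h3 : 0 <= Del * eps ^+ 2 by rewrite mulr_ge0 // sqr_ge0.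
  have h4 : 0 <= b * g * eps by rewrite !mulr_ge0 //; lra.
  lra.
rewrite max_l; last by lra.
have [gE|gp] := eqVneq g 0.
  rewrite gE mulr0 mul0r in Da; rewrite gE.
  have -> : Del = 0 by apply/eqP; rewrite eq_le D0 andbT.
  rewrite !(mulr0, mul0r, subr0, addr0); exact: lexx.
have gp' : 0 < g by rewrite lt_def gp g0.
set X := b ^+ 2 * g / alpha.
have hX : g * alpha * X = (b * g) ^+ 2.
  by rewrite /X; field; rewrite gt_eqF.
set u := D - eps.
have u0 : 0 < u by rewrite /u subr_gt0.
have -> : D = u + eps by rewrite /u subrK.
set k := g * alpha / 2.
have h1 : 0 <= (k * u - 2 * Del * eps - b * g) ^+ 2 by exact: sqr_ge0.
have h2 : 0 <= (k - 2 * Del) * (Del * eps ^+ 2 + eps * (b * g)).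
  apply: mulr_ge0; first by rewrite /k; lra.
  have q1 : 0 <= Del * eps ^+ 2 by apply: mulr_ge0 => //; exact: sqr_ge0.
  have q2 : 0 <= eps * (b * g) by apply: mulr_ge0; [lra | exact: mulr_ge0].
  lra.
have h3 : 0 <= (k / 2 - Del) * u ^+ 2.
  by apply: mulr_ge0; [rewrite /k; lra | exact: sqr_ge0].
have kp : 0 < 2 * k by rewrite /k; apply: mulr_gt0 => //; apply: divr_gt0 => //; apply: mulr_gt0.
rewrite -subr_ge0.
rewrite -(pmulr_rge0 _ kp).
have e1 : 2 * k = g * alpha by rewrite /k; field.
rewrite e1 in h3 *.
nra.
Qed.

Lemma s2sq : Num.sqrt 2 ^+ 2 = 2 :> R.
Proof. by rewrite sqr_sqrtr. Qed.

Lemma s2gt0 : 0 < Num.sqrt 2 :> R.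
Proof. by rewrite sqrtr_gt0. Qed.

Lemma sqG (G : R) : 0 <= G -> Num.sqrt G ^+ 2 = G.
Proof. by move=> h; rewrite sqr_sqrtr. Qed.

Lemma ln_le_sub1 (x : R) : 0 < x -> ln x <= x - 1.
Proof.
move=> hx; have := @le_ln1Dx R (x - 1).
by rewrite [1 + _]addrC subrK; apply; lra.
Qed.

Lemma ln_ge_1V (x : R) : 0 < x -> 1 - x^-1 <= ln x.
Proof.
move=> hx; have hx' : x \in Num.pos by rewrite posrE.
have := @ln_le_sub1 x^-1; rewrite invr_gt0 (lnV hx') => /(_ hx); lra.
Qed.

End Reals.

Definition psi {R : realType} (G : R) : R := if G <= 1 then G else 1 + ln G.
Definition efun {R : realType} (G : R) : R :=
  if G <= 1 then 2 * G else 2 + Num.sqrt 2 * (Num.sqrt G - 1).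
Definition mf {R : realType} (alpha eps L G : R) : R :=
  Num.min (alpha * G / 4) (L / (2 * Num.sqrt 2 * eps) * Num.sqrt G).

Section Reals2.
Context {R : realType}.

Lemma psi0 : psi (0 : R) = 0.
Proof. by rewrite /psi ler01. Qed.

Lemma psi_mono (G' G : R) : 0 <= G' -> G' <= G -> psi G' <= psi G.
Proof.
move=> h0 h1; rewrite /psi.
case: (leP G 1) => hG.
  by rewrite (le_trans h1 hG).
have lnG : 0 <= ln G by apply: ln_ge0; lra.
case: (leP G' 1) => hG'; first by lra.
rewrite lerD2l ler_ln ?posrE; lra.
Qed.

Lemma psi_final (G : R) : 0 <= G -> psi G <= 1 + ln (G + 1).
Proof.
move=> h0; rewrite /psi.
have l1 : 0 <= ln (G + 1) by apply: ln_ge0; lra.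
case: (leP G 1) => hG; first by lra.
rewrite lerD2l ler_ln ?posrE; lra.
Qed.

Lemma psi_step (G' g : R) : 0 <= G' -> 0 <= g -> 1 < G' + g ->
  g / (G' + g) <= psi (G' + g) - psi G'.
Proof.
move=> h0 g0 h1.
have Gp : 0 < G' + g by lra.
rewrite /psi (lt_geF h1).
have hl := @ln_ge_1V R (G' + g) Gp.
case: (leP G' 1) => hG'.
  suff : g / (G' + g) <= 2 - (G' + g)^-1 - G' by lra.
  rewrite -subr_ge0.
  have -> : 2 - (G' + g)^-1 - G' - g / (G' + g) = (G' + g - 1) * (1 - G') / (G' + g).
    by field; lra.
  apply: divr_ge0; last by lra.
  apply: mulr_ge0; lra.
have Gp' : 0 < G' by lra.
have := @ln_le_sub1 R (G'/(G' + g)) (divr_gt0 Gp' Gp).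
have hp : G' \in Num.pos by rewrite posrE.
have hpi : (G' + g)^-1 \in Num.pos by rewrite posrE invr_gt0.
rewrite (lnM hp hpi) (lnV (_ : G' + g \in Num.pos)); last by rewrite posrE.
have -> : G' / (G' + g) - 1 = - (g / (G' + g)) by field; lra.
lra.
Qed.

Lemma efun0 : efun (0 : R) = 0.
Proof. by rewrite /efun ler01 mulr0. Qed.

Lemma sqrt_ge1 (G : R) : 1 <= G -> 1 <= Num.sqrt G.
Proof. by move=> h; rewrite -sqrtr1 ler_sqrt //; lra. Qed.

Lemma sqrt_le1 (G : R) : 0 <= G -> G <= 1 -> Num.sqrt G <= 1.
Proof. by move=> h0 h; rewrite -sqrtr1 ler_sqrt. Qed.

Lemma s2_bounds : 4 / 3 <= Num.sqrt 2 :> R /\ Num.sqrt 2 <= 2 :> R.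
Proof.
have h := @s2sq R; have p := @s2gt0 R.
split; nra.
Qed.

Lemma efun_mono (G' G : R) : 0 <= G' -> G' <= G -> efun G' <= efun G.
Proof.
move=> h0 h1; rewrite /efun.
have [b1 b2] := s2_bounds.
case: (leP G 1) => hG.
  by rewrite (le_trans h1 hG); lra.
have q1 := sqrt_ge1 G (ltW hG).
case: (leP G' 1) => hG'.
  have : 0 <= Num.sqrt 2 * (Num.sqrt G - 1) by apply: mulr_ge0; lra.
  lra.
have : Num.sqrt G' <= Num.sqrt G by rewrite ler_sqrt; lra.
nra.
Qed.

Lemma efun_step (G' G : R) : 0 <= G' -> G' <= G -> 1 < G ->
  Num.sqrt 2 * (Num.sqrt G - Num.sqrt G') <= efun G - efun G'.
Proof.
move=> h0 h1 hG; rewrite /efun (lt_geF hG).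
have [b1 b2] := s2_bounds.
case: (leP G' 1) => hG'; last by lra.
have q0 : 0 <= Num.sqrt G' := sqrtr_ge0 _.
have q1 := sqrt_le1 G' h0 hG'.
have e := sqG _ h0.
rewrite -{2}e.
have : 0 <= (1 - Num.sqrt G') * (2 + 2 * Num.sqrt G' - Num.sqrt 2) by apply: mulr_ge0; lra.
nra.
Qed.

Lemma efun_final (G : R) : 0 <= G ->
  efun G <= 3 / 2 * Num.sqrt 2 * Num.sqrt G.
Proof.
move=> h0; rewrite /efun.
have [b1 b2] := s2_bounds.
have q0 : 0 <= Num.sqrt G := sqrtr_ge0 _.
case: (leP G 1) => hG.
  have q1 := sqrt_le1 G h0 hG.
  have e := sqG _ h0.
  rewrite -{1}e.
  nra.
have q1 := sqrt_ge1 G (ltW hG).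
nra.
Qed.

End Reals2.

Lemma inc_aux {R : realType} (alpha c a b G G' mG : R) : 0 < alpha -> 0 <= c -> 0 <= b -> b <= a ->
  b * b = G' -> a * a = G -> c * b < alpha * G' / 4 -> mG <= c * a ->
  mG - c * b <= alpha * (G - G') / 4.
Proof.
move=> a0 c0 q0 qq e1 e2 hc h.
have bp : 0 < b.
  rewrite lt_def q0 andbT; apply/negP => /eqP b0.
  move: hc; rewrite -e1 b0 !mulr0 !mul0r; lra.
have hcb : c <= alpha * b / 4.
  rewrite -e1 in hc.
  have : (c - alpha * b / 4) * b < 0 by rewrite mulrBl; lra.
  by rewrite pmulr_llt0 // subr_lt0 => /ltW.
have : 0 <= (a - b) * (alpha * b / 4 - c) by apply: mulr_ge0; lra.
have : 0 <= (a - b) * (alpha * a) by apply: mulr_ge0; [lra | apply: mulr_ge0; lra].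
rewrite -e1 -e2; nra.
Qed.

Lemma reg2_aux {R : realType} (alpha X q G : R) : 0 < alpha -> 0 <= q -> q <= X ->
  q * q = G -> alpha * G / 4 <= alpha * X / 4 * q.
Proof. move=> a0 q0 h e; rewrite -e; have := mulr_ge0 (ltW a0) q0; nra. Qed.

Lemma reg3_aux {R : realType} (alpha X q G : R) : 0 < alpha -> 0 <= X -> X <= q ->
  q * q = G -> alpha * X / 4 * q <= alpha * G / 4.
Proof. move=> a0 q0 h e; rewrite -e; have := mulr_ge0 (ltW a0) (le_trans q0 h); nra. Qed.

Lemma reg1_aux {R : realType} (alpha eps L g mG G th b : R) :
  0 < alpha -> 0 < eps -> 0 < L -> 0 <= g -> g <= 1 -> 0 <= mG -> mG <= alpha * G / 4 ->
  G <= 1 -> th = 2 * mG * (2 / alpha) -> b = (1 - th) * L ->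
  [/\ 0 <= th, th <= 1 &
  2 * b * g * eps + b ^+ 2 * g / alpha + th * (2 / alpha) * g ^+ 2 * L ^+ 2 / 2
    <= eps * L * (2 * g) + L ^+ 2 / alpha * g].
Proof.
move=> a0 e0 L0 g0 g1 m0 m1 G1 eth eb.
have tha : th * alpha = 4 * mG by rewrite eth; field; rewrite gt_eqF.
have th0 : 0 <= th by rewrite eth; apply: mulr_ge0; [lra | apply: divr_ge0; lra].
have thG : th <= G by nra.
have th1 : th <= 1 by lra.
split => //.
set La := L ^+ 2 / alpha.
have La0 : 0 <= La by rewrite /La divr_ge0 ?sqr_ge0 // ltW.
have -> : b ^+ 2 * g / alpha = (1 - th) ^+ 2 * g * La by rewrite eb /La; ring.
have -> : th * (2 / alpha) * g ^+ 2 * L ^+ 2 / 2 = th * g ^+ 2 * La.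
  by rewrite /La; field; rewrite gt_eqF.
have k1 : (1 - th) ^+ 2 * g + th * g ^+ 2 <= g.
  have : 0 <= g * (th * (2 - th - g)) by apply: mulr_ge0 => //; apply: mulr_ge0; lra.
  nra.
have k2 : ((1 - th) ^+ 2 * g + th * g ^+ 2) * La <= g * La by rewrite ler_wpM2r.
have k3 : b * g * eps <= L * g * eps.
  rewrite eb; apply: ler_wpM2r; first lra.
  apply: ler_wpM2r => //; nra.
nra.
Qed.

Lemma reg2_rem {R : realType} (alpha L g G : R) : 0 < alpha -> 0 <= g -> g <= 1 -> 0 < G ->
  1 * (2 / (alpha * G)) * g ^+ 2 * L ^+ 2 / 2 <= L ^+ 2 / alpha * (g / G).
Proof.
move=> a0 g0 g1 G0.
have -> : 1 * (2 / (alpha * G)) * g ^+ 2 * L ^+ 2 / 2 = L ^+ 2 / alpha * (g ^+ 2 / G).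
  by field; rewrite !gt_eqF.
apply: ler_wpM2l; first by rewrite divr_ge0 ?sqr_ge0 // ltW.
apply: ler_wpM2r; first by rewrite invr_ge0 ltW.
nra.
Qed.

Lemma reg3_rem {R : realType} (s2 eps L g q q' G G' : R) :
  0 < s2 -> 0 < eps -> 0 < L -> 0 <= g -> g <= 1 -> 0 <= q' -> q' <= q -> 0 < q ->
  q * q = G -> q' * q' = G' -> G = G' + g ->
  1 * (s2 * eps / (L * q)) * g ^+ 2 * L ^+ 2 / 2 <= eps * L * (s2 * (q - q')).
Proof.
move=> s0 e0 L0 g0 g1 q0 qq qp e1 e2 eG.
have -> : 1 * (s2 * eps / (L * q)) * g ^+ 2 * L ^+ 2 / 2 = eps * L * (s2 * (g ^+ 2 / (2 * q))).
  by field; rewrite !gt_eqF.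
apply: ler_wpM2l; first by apply: mulr_ge0; lra.
apply: ler_wpM2l; first lra.
rewrite ler_pdivrMr; last lra.
have : g = (q - q') * (q + q') by rewrite -[g](addKr G') -eG -e1 -e2; ring.
nra.
Qed.

Section MF.
Context {R : realType}.
Variables (alpha eps L : R).
Hypotheses (a0 : 0 < alpha) (e0 : 0 < eps) (L0 : 0 < L).

Definition c := L / (2 * Num.sqrt 2 * eps).
Definition X := Num.sqrt 2 * L / (alpha * eps).

Lemma cX : c = alpha * X / 4.
Proof.
have h := @s2sq R; have p := @s2gt0 R.
have nz : 2 * Num.sqrt 2 * eps != 0 by rewrite !mulf_neq0 ?gt_eqF.
apply: (mulIf nz).
have -> : c * (2 * Num.sqrt 2 * eps) = L by rewrite /c mulfVK.
have -> : alpha * X / 4 * (2 * Num.sqrt 2 * eps) = Num.sqrt 2 ^+ 2 * L / 2.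
  by rewrite /X; field; rewrite !gt_eqF.
by rewrite h; field.
Qed.

Notation m := (mf alpha eps L).

Lemma c_ge0 : 0 <= c.
Proof. by rewrite /c divr_ge0 ?ltW // !mulr_gt0 ?s2gt0. Qed.

Lemma mf0 : m 0 = 0.
Proof. by rewrite /mf sqrtr0 !mulr0 mul0r minxx. Qed.

Lemma mf_ge0 G : 0 <= G -> 0 <= m G.
Proof.
move=> h; rewrite /mf le_min; apply/andP; split.
  by rewrite divr_ge0 // mulr_ge0 // ltW.
by rewrite mulr_ge0 ?c_ge0 ?sqrtr_ge0.
Qed.

Lemma mf_le1 G : m G <= alpha * G / 4.
Proof. by rewrite /mf ge_min lexx. Qed.

Lemma mf_le2 G : m G <= c * Num.sqrt G.
Proof. by rewrite /mf ge_min lexx orbT. Qed.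

Lemma mf_mono G' G : 0 <= G' -> G' <= G -> m G' <= m G.
Proof.
move=> h0 h1; rewrite /mf le_min !ge_min; apply/andP; split.
  apply/orP; left; apply: ler_wpM2r => //; apply: ler_wpM2l => //; exact: ltW.
apply/orP; right; apply: ler_wpM2l; first exact: c_ge0.
rewrite ler_sqrt //; lra.
Qed.

Lemma mf_inc G' G : 0 <= G' -> G' <= G -> m G - m G' <= alpha * (G - G') / 4.
Proof.
move=> h0 h1.
have q0 : 0 <= Num.sqrt G' := sqrtr_ge0 _.
have qq : Num.sqrt G' <= Num.sqrt G by rewrite ler_sqrt; lra.
have e1 := sqG _ h0.
have e2 : Num.sqrt G ^+ 2 = G by apply: sqG; lra.
have cg := c_ge0.
case: (leP (alpha * G' / 4) (c * Num.sqrt G')) => hc.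
  have -> : m G' = alpha * G' / 4 by rewrite /mf min_l.
  have := mf_le1 G; lra.
have -> : m G' = c * Num.sqrt G' by rewrite /mf min_r // ltW.
have hm := mf_le2 G.
apply: (inc_aux _ _ _ _ _ _ _ a0 cg q0 qq _ _ hc hm).
  by rewrite -expr2.
by rewrite -expr2.
Qed.

Lemma X0 : 0 <= X.
Proof. by rewrite /X divr_ge0 ?mulr_ge0 ?ltW ?s2gt0. Qed.

Lemma mf_reg2 G : 0 <= G -> G <= X ^+ 2 -> m G = alpha * G / 4.
Proof.
move=> h0 h1.
have q0 : 0 <= Num.sqrt G := sqrtr_ge0 _.
have hq : Num.sqrt G <= X by rewrite -(ger0_norm X0) -sqrtr_sqr ler_sqrt // sqr_ge0.
have e : Num.sqrt G * Num.sqrt G = G by rewrite -expr2 sqG.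
have hle : alpha * G / 4 <= c * Num.sqrt G.
  rewrite cX; exact: (reg2_aux _ _ _ _ a0 q0 hq e).
by rewrite /mf min_l.
Qed.

Lemma mf_reg3 G : 0 <= G -> X ^+ 2 <= G -> m G = c * Num.sqrt G.
Proof.
move=> h0 h1.
have q0 : 0 <= Num.sqrt G := sqrtr_ge0 _.
have hq : X <= Num.sqrt G by rewrite -(ger0_norm X0) -sqrtr_sqr ler_sqrt // sqr_ge0.
have e : Num.sqrt G * Num.sqrt G = G by rewrite -expr2 sqG.
have hle : c * Num.sqrt G <= alpha * G / 4.
  rewrite cX; exact: (reg3_aux _ _ _ _ a0 X0 hq e).
by rewrite /mf min_r.
Qed.

Lemma region (G' g eta th b : R) : 0 <= G' -> 0 <= g -> g <= 1 ->
  eta = Rprime alpha eps L (G' + g) -> th = 2 * m (G' + g) * eta -> b = (1 - th) * L ->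
  [/\ 0 < eta, 0 <= th, th <= 1, 0 <= b &
  2 * b * g * eps + b ^+ 2 * g / alpha + th * eta * g ^+ 2 * L ^+ 2 / 2
    <= eps * L * (efun (G' + g) - efun G') + L ^+ 2 / alpha * (psi (G' + g) - psi G')].
Proof.
move=> h0 g0 g1 eeta eth eb; have a0' := a0; have e0' := e0; have L0' := L0.
have G0 : 0 <= G' + g by lra.
have eL0 : 0 <= eps * L by apply: mulr_ge0; lra.
have La0 : 0 <= L ^+ 2 / alpha by rewrite divr_ge0 ?sqr_ge0 // ltW.
have em : efun G' <= efun (G' + g) by apply: efun_mono => //; lra.
have pm : psi G' <= psi (G' + g) by apply: psi_mono => //; lra.
case: (leP (G' + g) 1) => hG.
  have eeta' : eta = 2 / alpha by rewrite eeta /Rprime hG.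
  rewrite eeta' in eth.
  have [th0 th1 H] := reg1_aux _ _ _ _ _ _ _ _ a0 e0 L0 g0 g1 (mf_ge0 _ G0) (mf_le1 _) hG eth eb.
  have b0 : 0 <= b by rewrite eb; apply: mulr_ge0; lra.
  split => //; first by rewrite eeta' divr_gt0.
  rewrite eeta'.
  have hG' : G' <= 1 by lra.
  rewrite /efun /psi hG hG'.
  have -> : 2 * (G' + g) - 2 * G' = 2 * g by ring.
  by have -> : G' + g - G' = g by ring.
have hG1 : (G' + g <= 1) = false by apply/negbTE; rewrite -ltNge.
have s2p := @s2gt0 R.
case: (leP (G' + g) (X ^+ 2)) => hX.
  have eeta' : eta = 2 / (alpha * (G' + g)) by rewrite eeta /Rprime hG1 -/X hX.
  have th1 : th = 1.
    by rewrite eth eeta' mf_reg2 //; field; rewrite !gt_eqF //; lra.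
  have b0 : b = 0 by rewrite eb th1 subrr mul0r.
  split => //; first by rewrite eeta' divr_gt0 // mulr_gt0 //; lra.
  - by rewrite th1.
  - by rewrite th1.
  - by rewrite b0.
  rewrite b0 th1 eeta' expr0n /= !mulr0 !mul0r !add0r.
  have h1 := reg2_rem _ L _ (G' + g) a0 g0 g1.
  have h2 := psi_step _ _ h0 g0 hG.
  have h3 : 0 <= eps * L * (efun (G' + g) - efun G') by apply: mulr_ge0 => //; rewrite subr_ge0.
  have h4 : L ^+ 2 / alpha * (g / (G' + g)) <= L ^+ 2 / alpha * (psi (G' + g) - psi G') by apply: ler_wpM2l.
  have := h1 ltac:(lra); lra.
set q := Num.sqrt (G' + g).
have qp : 0 < q by rewrite /q sqrtr_gt0; lra.
have eeta' : eta = Num.sqrt 2 * eps / (L * q) by rewrite eeta /Rprime hG1 -/X (lt_geF hX).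
have th1 : th = 1.
  rewrite eth eeta' mf_reg3 ?(ltW hX) // -/q /c; field.
  by rewrite !gt_eqF.
have b0 : b = 0 by rewrite eb th1 subrr mul0r.
split => //; first by rewrite eeta' divr_gt0 // ?mulr_gt0 //.
- by rewrite th1.
- by rewrite th1.
- by rewrite b0.
rewrite b0 th1 eeta' expr0n /= !mulr0 !mul0r !add0r.
have q0' : 0 <= Num.sqrt G' := sqrtr_ge0 _.
have qq : Num.sqrt G' <= q by rewrite /q ler_sqrt; lra.
have e1 : q * q = G' + g by rewrite -expr2 /q sqG.
have e2 : Num.sqrt G' * Num.sqrt G' = G' by rewrite -expr2 sqG.
have h1 := reg3_rem _ _ _ _ _ _ _ _ s2p e0 L0 g0 g1 q0' qq qp e1 e2 erefl.
have h2 : G' <= G' + g -> _ := fun H => efun_step _ _ h0 H hG.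
have h3 : 0 <= L ^+ 2 / alpha * (psi (G' + g) - psi G') by apply: mulr_ge0 => //; rewrite subr_ge0.
have h4 : eps * L * (Num.sqrt 2 * (q - Num.sqrt G')) <= eps * L * (efun (G' + g) - efun G').
  by apply: ler_wpM2l => //; apply: h2; lra.
lra.
Qed.
End MF.

Lemma step_real {R : realType} (alpha eps L g r s Q Q' N mt mp eta th b D : R) :
  0 < alpha -> 0 < eps -> 0 < L -> 0 <= g -> 0 <= D -> Q = D ^+ 2 -> N <= L ^+ 2 ->
  0 <= mt -> 0 <= mt - mp -> mt - mp <= alpha * g / 4 -> 0 < eta ->
  th = 2 * mt * eta -> 0 <= th -> th <= 1 -> b = (1 - th) * L -> 0 <= b ->
  Q' <= Q - 2 * eta * g * s + eta ^+ 2 * g ^+ 2 * N ->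
  r <= s - alpha / 2 * (Num.max (D - eps) 0) ^+ 2 ->
  s <= L * D ->
  g * r + mt * Q' - mp * Q <=
  2 * eps ^+ 2 * (mt - mp) + (2 * b * g * eps + b ^+ 2 * g / alpha + th * eta * g ^+ 2 * L ^+ 2 / 2).
Proof.
move=> a0 e0 L0 g0 D0 eQ hN m0 d0 d1 et0 eth th0 th1 eb b0 hP hC hCS.
have h1 : mt * Q' <= mt * Q - th * g * s + th * eta * g ^+ 2 * N / 2.
  have := ler_wpM2l m0 hP.
  have -> : mt * (Q - 2 * eta * g * s + eta ^+ 2 * g ^+ 2 * N) =
    mt * Q - th * g * s + th * eta * g ^+ 2 * N / 2 by rewrite eth; field.
  by [].
have h2 : th * eta * g ^+ 2 * N / 2 <= th * eta * g ^+ 2 * L ^+ 2 / 2.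
  apply: ler_wpM2r; first lra.
  apply: ler_wpM2l => //.
  by apply: mulr_ge0; [apply: mulr_ge0 => //; lra | exact: sqr_ge0].
have h3 : g * r <= g * s - g * alpha / 2 * (Num.max (D - eps) 0) ^+ 2.
  have := ler_wpM2l g0 hC.
  have -> : g * (s - alpha / 2 * Num.max (D - eps) 0 ^+ 2) =
     g * s - g * alpha / 2 * Num.max (D - eps) 0 ^+ 2 by ring.
  by [].
have h4 : (1 - th) * g * s <= b * g * D.
  have t1 : 0 <= 1 - th by lra.
  have := ler_wpM2l (mulr_ge0 t1 g0) hCS.
  have -> : b * g * D = (1 - th) * g * (L * D) by rewrite eb; ring.
  by [].
have F := Fbound _ _ _ _ _ _ a0 e0 g0 d0 d1 b0 D0.
rewrite eQ.
rewrite eQ in h1.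
have e5 : th * g * s = g * s - (1 - th) * g * s by ring.
lra.
Qed.

Lemma fin_aux {R : realType} (eps L s2 q M E P A lnv : R) : 0 < eps -> 0 < L -> 0 < s2 ->
  s2 ^+ 2 = 2 -> 0 <= q -> M <= L / (2 * s2 * eps) * q -> E <= 3 / 2 * s2 * q ->
  0 <= A -> P <= 1 + lnv ->
  2 * eps ^+ 2 * M + eps * L * E + A * P <= 2 * s2 * eps * L * q + A * (lnv + 1).
Proof.
move=> e0 L0 s0 hs q0 hM hE A0 hP.
have e1 : 2 * eps ^+ 2 * (L / (2 * s2 * eps) * q) = eps * L * q * s2 / 2.
  have nz : s2 != 0 by rewrite gt_eqF.
  apply: (mulIf nz).
  have -> : eps * L * q * s2 / 2 * s2 = eps * L * q * s2 ^+ 2 / 2 by ring.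
  rewrite hs; field; rewrite !gt_eqF //.
have h1 : 2 * eps ^+ 2 * M <= 2 * eps ^+ 2 * (L / (2 * s2 * eps) * q).
  by apply: ler_wpM2l => //; apply: mulr_ge0 => //; exact: sqr_ge0.
have h2 : eps * L * E <= eps * L * (3 / 2 * s2 * q).
  by apply: ler_wpM2l => //; apply: mulr_ge0; lra.
have h3 : A * P <= A * (1 + lnv) by apply: ler_wpM2l.
rewrite e1 in h1.
have -> : A * (lnv + 1) = A * (1 + lnv) by rewrite addrC.
have -> : 2 * s2 * eps * L * q = eps * L * q * s2 / 2 + eps * L * (3 / 2 * s2 * q) by field.
lra.
Qed.

Lemma cumG0 {R : realType} (g : nat -> R) : cumG g 0 = 0.
Proof. by rewrite /cumG big_geq. Qed.

Lemma cumGS {R : realType} (g : nat -> R) n : cumG g n.+1 = cumG g n + g n.+1.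
Proof. by rewrite /cumG big_nat_recr. Qed.

Lemma cumG_ge0 {R : realType} (g : nat -> R) T n : (forall t, (1 <= t <= T)%N -> 0 <= g t <= 1) ->
  (n <= T)%N -> 0 <= cumG g n.
Proof.
move=> hg hn; rewrite /cumG big_nat_cond; apply: sumr_ge0 => i /andP[/andP[h1 h2] _].
have hi : (1 <= i <= T)%N by rewrite h1 /=; apply: leq_trans hn; rewrite -ltnS.
by have /andP[] := hg i hi.
Qed.

Theorem theorem13 (R : realType) (d : nat) (K : set 'rV[R]_d)
  (alpha eps L : R) (T : nat) (ell : nat -> 'rV[R]_d -> R) (g : nat -> R)
  (grad : nat -> 'rV[R]_d) (x : nat -> 'rV[R]_d) :
  closed K -> convex_set_rV K ->
  0 < alpha -> 0 < eps -> 0 < L ->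
  (forall t, (1 <= t <= T)%N -> nearly_strongly_convex K alpha eps (ell t)) ->
  (forall t, (1 <= t <= T)%N -> 0 <= g t <= 1) ->
  K (x 1%N) ->
  (forall t, (1 <= t <= T)%N ->
     is_subgradient K (ell t) (x t) (grad t) /\ enorm (grad t) <= L) ->
  (forall t, (1 <= t <= T)%N ->
     is_proj K (x t - (Rprime alpha eps L (cumG g t) * g t) *: grad t) (x t.+1)) ->
  forall xs, K xs ->
    \sum_(1 <= t < T.+1) g t * (ell t (x t) - ell t xs)
      <= 2 * Num.sqrt 2 * eps * L * Num.sqrt (cumG g T)
         + L ^+ 2 / alpha * (ln (cumG g T + 1) + 1).
Proof.
move=> _ cK a0 e0 L0 hsc hg Kx1 hsub hproj xs Kxs.
have Kx : forall t, (1 <= t <= T.+1)%N -> K (x t).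
  elim=> [//|t IH] /andP[h1 h2].
  case: t IH h1 h2 => [_ _ _ //|t] IH _ h2.
  have ht : (1 <= t.+1 <= T)%N by rewrite ltn0Sn /= -ltnS.
  by case: (hproj _ ht).
set Q := fun t => dotv (x t - xs) (x t - xs).
set m := mf alpha eps L.
set Phi := fun G => 2 * eps ^+ 2 * m G + eps * L * efun G + L ^+ 2 / alpha * psi G.
have inv : forall n, (n <= T)%N ->
  \sum_(1 <= t < n.+1) g t * (ell t (x t) - ell t xs) + m (cumG g n) * Q n.+1
  <= Phi (cumG g n).
  elim=> [_|n IH hn].
    rewrite big_geq // cumG0 /Phi /m mf0 efun0 psi0 !(mulr0, mul0r, addr0, add0r).
    exact: lexx.
  have hn' : (n <= T)%N by apply: ltnW.
  have IH' := IH hn'.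
  have ht : (1 <= n.+1 <= T)%N by rewrite ltn0Sn.
  rewrite big_nat_recr //= cumGS.
  set G' := cumG g n; set gt := g n.+1.
  have G'0 : 0 <= G' by exact: (cumG_ge0 _ _ _ hg hn').
  have /andP[g0 g1] : 0 <= gt <= 1 := hg _ ht.
  set eta := Rprime alpha eps L (G' + gt).
  set th := 2 * m (G' + gt) * eta.
  set b := (1 - th) * L.
  have [et0 th0 th1 b0 hrem] := region _ _ _ a0 e0 L0 _ _ _ _ _ G'0 g0 g1 (erefl eta) (erefl th) (erefl b).
  have [hsub1 hgL] := hsub _ ht.
  have [_ hnsc] := hsc _ ht.
  have Kxt : K (x n.+1) by apply: Kx; rewrite ltn0Sn /=; apply: leq_trans hn _.
  set w := x n.+1 - xs.
  set s := dotv (grad n.+1) w.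
  set D := enorm w.
  have D0 : 0 <= D := enorm_ge0 _.
  have eQ : Q n.+1 = D ^+ 2 by rewrite /D enorm_sq.
  have hN : dotv (grad n.+1) (grad n.+1) <= L ^+ 2.
    rewrite -enorm_sq; have := enorm_ge0 (grad n.+1); nra.
  have hm0 : 0 <= m (G' + gt) by apply: mf_ge0 => //; lra.
  have hd0 : 0 <= m (G' + gt) - m G'.
    by rewrite subr_ge0; apply: mf_mono => //; lra.
  have hd1 : m (G' + gt) - m G' <= alpha * gt / 4.
    have := mf_inc _ _ _ a0 e0 L0 G' (G' + gt) G'0.
    have -> : G' + gt - G' = gt by ring.
    apply; lra.
  have hP : Q n.+2 <= Q n.+1 - 2 * eta * gt * s + eta ^+ 2 * gt ^+ 2 * dotv (grad n.+1) (grad n.+1).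
    have := proj_nonexp _ _ _ _ cK (hproj _ ht) Kxs.
    have -> : x n.+1 - (Rprime alpha eps L (cumG g n.+1) * g n.+1) *: grad n.+1 - xs =
       1 *: w + (- (eta * gt)) *: grad n.+1.
      by rewrite /w /eta /gt cumGS -/G'; apply/matrixP => i j; rewrite !mxE; ring.
    rewrite dotv_lin2 (dotvC w) -/s.
    have -> : 1 ^+ 2 * dotv w w + 2 * 1 * - (eta * gt) * s +
       (- (eta * gt)) ^+ 2 * dotv (grad n.+1) (grad n.+1) =
       Q n.+1 - 2 * eta * gt * s + eta ^+ 2 * gt ^+ 2 * dotv (grad n.+1) (grad n.+1).
      by rewrite /Q -/w; ring.
    by [].
  have hC : ell n.+1 (x n.+1) - ell n.+1 xs <= s - alpha / 2 * (Num.max (D - eps) 0) ^+ 2.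
    have := hnsc _ _ _ Kxt Kxs hsub1.
    have e1 : xs - x n.+1 = (-1) *: w by rewrite /w; apply/matrixP => i j; rewrite !mxE; ring.
    have -> : enorm (xs - x n.+1) = D.
      by rewrite /D /enorm e1 dotvZl dotvZr !mulN1r opprK.
    rewrite e1 dotvZr -/s.
    lra.
  have hCS : s <= L * D.
    have := CS (grad n.+1) w.
    have := ler_wpM2r D0 hgL.
    rewrite -/s -/D; lra.
  have hstep := step_real _ _ _ _ _ _ _ _ _ _ _ _ _ _ _ a0 e0 L0 g0 D0 eQ hN hm0 hd0 hd1 et0 (erefl th) th0 th1 (erefl b) b0 hP hC hCS.
  rewrite /Phi in IH' *.
  rewrite -/G' in IH'.
  lra.
have := inv T (leqnn T).
have GT0 : 0 <= cumG g T := cumG_ge0 _ _ _ hg (leqnn T).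
have hQ : 0 <= m (cumG g T) * Q T.+1 by apply: mulr_ge0; [apply: mf_ge0 | exact: dotv_ge0].
move=> H.
have HP : Phi (cumG g T) <= 2 * Num.sqrt 2 * eps * L * Num.sqrt (cumG g T)
         + L ^+ 2 / alpha * (ln (cumG g T + 1) + 1).
  rewrite /Phi.
  have A0 : 0 <= L ^+ 2 / alpha by rewrite divr_ge0 ?sqr_ge0 // ltW.
  exact: (fin_aux _ _ _ _ _ _ _ _ _ e0 L0 s2gt0 s2sq (sqrtr_ge0 _) (mf_le2 _ _ _ _)
    (efun_final _ GT0) A0 (psi_final _ GT0)).
lra.
Qed.
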